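(* Let $T$ be a string of length $n$ and $1\le i\le j<n$. Let $k=|\mathit{lrs}_{i,j+1}|$ and $\alpha=T[j+1]$. Then $[j+1-k,j+1]\in\mathsf{MUS}(T[i..j+1])$ if and only if $T[j+1-k..j+1]=\alpha^{k+1}$ or $k\le|\mathit{lrs}_{i,j}|$.
   Context: $T[a..b]$ denotes the substring of $T$ from position $a$ to $b$; $\alpha^m$ is the string of $m$ copies of character $\alpha$. For strings $S,w$, $\#\mathit{occ}_S(w)$ is the number of positions at which $w$ occurs in $S$, with $\#\mathit{occ}_S(\varepsilon)=|S|+1$. A substring $w$ of $S$ is unique in $S$ if $\#\mathit{occ}_S(w)=1$ and repeating if $\#\mathit{occ}_S(w)\ge 2$. For $1\le i\le j\le n$, $\mathsf{MUS}(T[i..j])$ is the set of intervals $[s,t]$ (positions in $T$) with $i\le s\le t\le j$ such that $T[s..t]$ is unique in $T[i..j]$ and every proper substring of $T[s..t]$ (including the empty string) is repeating in $T[i..j]$. $\mathit{lrs}_{i,j}$ is the longest suffix of $T[i..j]$ that occurs at least twice in $T[i..j]$ (possibly empty). *)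

(* Defs.v *)
(* Strings are sequences over an eqType; positions in T are 1-based. *)
From mathcomp Require Import all_boot.
Set Implicit Arguments. Unset Strict Implicit. Unset Printing Implicit Defensive.

Definition sub (A : eqType) (T : seq A) (a b : nat) : seq A :=
  take (b.+1 - a) (drop a.-1 T).

(* #occ_S(w): number of starting positions p (0-based, 0 <= p <= |S|-|w|)
   at which w occurs in S.  In particular #occ_S(eps) = |S|+1. *)
Definition occ (A : eqType) (S w : seq A) : nat :=
  count (fun p => take (size w) (drop p S) == w) (iota 0 (size S - size w).+1).

Definition unique_in (A : eqType) (S w : seq A) : Prop := occ S w = 1.
Definition repeating_in (A : eqType) (S w : seq A) : Prop := 2 <= occ S w.

Definition inMUS (A : eqType) (T : seq A) (i j s t : nat) : Prop :=
  [/\ i <= s, s <= t, t <= j,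
      unique_in (sub T i j) (sub T s t)
    & forall w : seq A, infix w (sub T s t) -> w != sub T s t ->
        repeating_in (sub T i j) w].

(* |lrs_{i,j}|: length of the longest suffix of T[i..j] occurring at least twice
   in T[i..j] (the empty suffix always qualifies when i <= j). *)
Definition lrs_len (A : eqType) (T : seq A) (i j : nat) : nat :=
  let S := sub T i j in
  \max_(k < (size S).+1 | 2 <= occ S (drop (size S - k) S)) (k : nat).

(* Main.v *)
Require Import Defs.
From mathcomp Require Import all_boot zify.
Set Implicit Arguments. Unset Strict Implicit.

Section S.
Variable A : eqType.
Implicit Types S w x y : seq A.

Definition at_ S w p := (p <= size S) && (take (size w) (drop p S) == w).

Lemma occE S w : occ S w = count (at_ S w) (iota 0 (size S - size w).+1).
Proof.
apply: eq_in_count => p; rewrite mem_iota /at_ => /andP[_ h].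
by have -> : p <= size S by move: h; lia.
Qed.

Lemma atP S w p : at_ S w p <-> exists x y, S = x ++ w ++ y /\ size x = p.
Proof.
split.
- case/andP=> Hp /eqP H.
  have Hs : size w <= size S - p.
    by have := congr1 size H; rewrite size_take size_drop; case: ltnP; lia.
  exists (take p S), (drop (size w) (drop p S)); split.
    by rewrite -{1}(cat_take_drop p S) -{1}(cat_take_drop (size w) (drop p S)) H.
  by rewrite size_take; case: ltnP => //; lia.
- case=> x [y [-> <-]]; rewrite /at_ drop_size_cat // take_size_cat // eqxx size_cat.
  by rewrite leq_addr.
Qed.

Lemma at_le S w p : at_ S w p -> p + size w <= size S.
Proof. by case/atP=> x [y [-> <-]]; rewrite !size_cat; lia. Qed.

Lemma repP S w : repeating_in S w <->
  exists p1 p2, p1 != p2 /\ at_ S w p1 /\ at_ S w p2.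
Proof.
rewrite /repeating_in occE -size_filter.
split.
- set f := filter _ _.
  have uf : uniq f by rewrite filter_uniq // iota_uniq.
  case E: f uf => [|a [|b r]] //= /andP[Ha _] _.
  have : a \in f by rewrite E inE eqxx.
  have : b \in f by rewrite E !inE eqxx orbT.
  rewrite !mem_filter => /andP[hb _] /andP[ha _].
  exists a, b; split => //; apply/negP => /eqP ab; move: Ha; by rewrite ab inE eqxx.
- case=> p1 [p2 [ne [h1 h2]]].
  have m1 : p1 \in filter (at_ S w) (iota 0 (size S - size w).+1).
    by rewrite mem_filter h1 mem_iota /=; move: (at_le h1); lia.
  have m2 : p2 \in filter (at_ S w) (iota 0 (size S - size w).+1).
    by rewrite mem_filter h2 mem_iota /=; move: (at_le h2); lia.
  move: m1 m2; case: (filter _ _) => [|a [|b r]] //=.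
  by rewrite !inE => /eqP e1 /eqP e2; rewrite e1 e2 eqxx in ne.
Qed.

Lemma uniq_occ S w p : at_ S w p -> ~ repeating_in S w -> unique_in S w.
Proof.
move=> h nr; rewrite /unique_in.
have : 0 < occ S w.
  rewrite occE -has_count; apply/hasP; exists p => //.
  by rewrite mem_iota /=; move: (at_le h); lia.
by move: nr; rewrite /repeating_in; lia.
Qed.

Lemma rep_infix S v w : infix w v -> repeating_in S v -> repeating_in S w.
Proof.
case/infixP=> a [b ->] /repP [p1 [p2 [ne [h1 h2]]]].
apply/repP; exists (p1 + size a), (p2 + size a); split; first by move: ne; lia.
split.
- case/atP: h1 => x [y [-> <-]]; apply/atP; exists (x ++ a), (b ++ y).
  by rewrite !catA size_cat.
- case/atP: h2 => x [y [-> <-]]; apply/atP; exists (x ++ a), (b ++ y).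
  by rewrite !catA size_cat.
Qed.

Lemma rep_cat S y w : repeating_in S w -> repeating_in (S ++ y) w.
Proof.
case/repP=> p1 [p2 [ne [h1 h2]]]; apply/repP; exists p1, p2; split => //.
split.
- case/atP: h1 => x [z [-> <-]]; apply/atP; exists x, (z ++ y); by rewrite !catA.
- case/atP: h2 => x [z [-> <-]]; apply/atP; exists x, (z ++ y); by rewrite !catA.
Qed.

Lemma rcons_const (u : seq A) a c : rcons u a = c :: u -> c = a /\ u = nseq (size u) a.
Proof.
elim: u c => [|b u IH] c /=; first by case.
case=> <- /IH [-> ->]; by rewrite size_nseq.
Qed.

Lemma occ_self S : occ S S = 1.
Proof. by rewrite /occ subnn /= drop0 take_size eqxx. Qed.

End S.

Section S2.
Variable A : eqType.
Implicit Types S w x y : seq A.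

Definition Lr S := \max_(k < (size S).+1 | 2 <= occ S (drop (size S - k) S)) (k : nat).

Lemma Lr_ge S k : k <= size S -> repeating_in S (drop (size S - k) S) -> k <= Lr S.
Proof.
move=> hk hr; have hk' : k < (size S).+1 by [].
exact: (@leq_bigmax_cond _ (fun k : 'I_(size S).+1 => 2 <= occ S (drop (size S - k) S))
  (fun k => nat_of_ord k) (Ordinal hk')).
Qed.

Lemma Lr_prop S : 0 < size S ->
  Lr S < size S /\ repeating_in S (drop (size S - Lr S) S).
Proof.
move=> hS; rewrite /Lr.
apply: (@big_ind nat (fun x : nat => x < size S /\ repeating_in S (drop (size S - x) S))).
- split => //; rewrite subn0 drop_size; apply/repP; exists 0, 1; split => //.
  split; apply/atP.
    by exists [::], S.
  exists (take 1 S), (drop 1 S); rewrite cat_take_drop size_take.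
  by split => //; case: (size S) hS => [|[|]].
- by move=> x y hx hy; rewrite /maxn; case: ifP.
- move=> i hi; split => //.
  have : i <= size S by have := ltn_ord i.
  rewrite leq_eqVlt => /orP [/eqP e|//].
  by move: hi; rewrite e subnn drop0 occ_self.
Qed.

Lemma mus_core X : 0 < size X ->
  let k := Lr X in let u := drop (size X - k.+1) X in
  unique_in X u /\
  ((forall w, infix w u -> w != u -> repeating_in X w) <-> repeating_in X (take k u)).
Proof.
move=> hX k u; have [hk hr] := Lr_prop hX; rewrite -/k in hk hr.
have uE : u = drop (size X - k.+1) X by [].
have kE : k = Lr X by [].
clearbody u k.
have su : size u = k.+1 by rewrite uE size_drop; lia.
split.
- apply: (@uniq_occ _ _ _ (size X - k.+1)).
    apply/atP; exists (take (size X - k.+1) X), [::]; rewrite uE cats0 cat_take_drop size_take.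
    by split => //; case: ltnP => //; lia.
  by rewrite uE => r; have := Lr_ge hk r; rewrite -kE ltnn.
split.
- move=> H; apply: H; first by rewrite -{2}(cat_take_drop k u) prefix_infix.
  by apply/eqP => e; have := congr1 size e; rewrite size_take su ltnSn; lia.
- move=> hu w /infixP [a [b E]] ne.
  case/lastP: b E => [|b z] E.
    case: a E => [|c a] E; first by move: ne; rewrite E cats0 eqxx.
    apply: (rep_infix _ hr); apply/infixP; exists a, [::].
    have -> : drop (size X - k) X = drop 1 u by rewrite uE drop_drop; congr drop; lia.
    by rewrite E /= drop0.
  apply: (rep_infix _ hu); apply/infixP; exists a, b.
  rewrite E -cats1 !catA take_size_cat //.
  by have := congr1 size E; rewrite su !size_cat size_rcons; lia.
Qed.
End S2.

Section S3.
Variable A : eqType.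
Implicit Types S w x y : seq A.

Lemma rep_nil S : 0 < size S -> repeating_in S [::].
Proof.
move=> hS; apply/repP; exists 0, 1; split => //.
split; apply/atP.
  by exists [::], S.
exists (take 1 S), (drop 1 S); rewrite cat_take_drop size_take.
by split => //; case: (size S) hS => [|[|]].
Qed.

Lemma rep_rcons S (a : A) k : k <= size S ->
  repeating_in (rcons S a) (drop (size S - k) S) <->
  (rcons (drop (size S - k) S) a = nseq k.+1 a \/ k <= Lr S).
Proof.
move=> hk; set u := drop (size S - k) S.
have uE : u = drop (size S - k) S by [].
have su : size u = k by rewrite size_drop; lia.
set P := take (size S - k) S.
have SE : S = P ++ u by rewrite cat_take_drop.
have sP : size P = size S - k by rewrite size_take; case: ltnP; lia.
clearbody u P.
have RE : rcons S a = P ++ u ++ [:: a] by rewrite -cats1 SE catA.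
split.
- case/repP=> p1 [p2 [ne [h1 h2]]].
  have inS : forall p, at_ (rcons S a) u p -> p < size S - k -> k <= Lr S.
    move=> p /atP [x [y [E hx]]] hp.
    apply: Lr_ge => //; rewrite -uE.
    apply/repP; exists p, (size S - k); split; first by rewrite neq_ltn hp.
    split; apply/atP.
    + case/lastP: y E => [|y z] E.
        by have := congr1 size E; rewrite size_rcons !size_cat /=; lia.
      exists x, y; split => //.
      by move: E; rewrite -!rcons_cat => /eqP; rewrite eqseq_rcons => /andP[/eqP ->].
    + by exists P, [::]; rewrite cats0 -SE.
  have le1 := at_le h1; have le2 := at_le h2; rewrite size_rcons su in le1 le2.
  have last : forall p, at_ (rcons S a) u p -> p = (size S - k).+1 ->
      rcons u a = nseq k.+1 a.
    move=> p /atP [x [y [E hx]]] hp.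
    have y0 : y = [::] by apply/eqP; rewrite -size_eq0;
      have := congr1 size E; rewrite size_rcons !size_cat; lia.
    case/lastP: x E hx => [|x c] E hx; first by rewrite hp in hx.
    move: E; rewrite RE y0 cats0 -cats1 -catA /= => E.
    have sx : size x = size P by move: hx; rewrite size_rcons; lia.
    have := congr1 (drop (size P)) E.
    rewrite drop_size_cat // -sx drop_size_cat // => E2.
    have [ca un] := rcons_const (etrans (esym (cats1 u a)) E2).
    by rewrite -cats1 E2 ca {1}un su.
  case: (ltnP p1 (size S - k)) => l1; first by right; apply: inS l1.
  case: (ltnP p2 (size S - k)) => l2; first by right; apply: inS l2.
  left.
  case: (eqVneq p1 (size S - k).+1) => e1; first by apply: last e1.
  apply: (last p2) => //; move: ne e1; lia.
- case.
  + move=> N.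
    have un : u = nseq k a.
      by rewrite -(take_size_cat [:: a] su) cats1 N take_nseq.
    have ua : u ++ [:: a] = a :: u by rewrite cats1 N un.
    apply/repP; exists (size P), (size P).+1; split; first by rewrite neq_ltn ltnSn.
    split; apply/atP.
      by exists P, [:: a].
    exists (P ++ [:: a]), [::]; rewrite size_cat addn1 RE ua; split => //.
    by rewrite cats0 -catA.
  + move=> hL.
    case: k hk hL uE su {SE sP RE} => [|k] hk hL uE su.
      have -> : u = [::] by apply/eqP; rewrite -size_eq0 su.
      by apply: rep_nil; rewrite size_rcons.
    have [hl hr] := Lr_prop (leq_trans (ltn0Sn k) hk).
    rewrite -cats1; apply: rep_cat; apply: (rep_infix _ hr).
    rewrite uE; apply/infixP; exists (take (Lr S - k.+1) (drop (size S - Lr S) S)), [::].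
    rewrite cats0 -{1}(cat_take_drop (Lr S - k.+1) (drop (size S - Lr S) S)) drop_drop.
    by congr (_ ++ drop _ _); lia.
Qed.
End S3.

Lemma sub_drop (A : eqType) (T : seq A) i a b : 1 <= i -> i <= a ->
  sub T a b = drop (a - i) (sub T i b).
Proof.
move=> h1 h2; rewrite /sub; case: (leqP a b.+1) => h3.
  have -> : b.+1 - i = (b.+1 - a) + (a - i) by lia.
  rewrite -take_drop drop_drop.
  by have -> : a - i + i.-1 = a.-1 by lia.
have -> : b.+1 - a = 0 by lia.
rewrite take0 drop_oversize // size_take; case: ltnP; lia.
Qed.

Lemma subS (A : eqType) (T : seq A) i j alpha : 1 <= i -> i <= j.+1 -> j < size T ->
  onth T j = Some alpha -> sub T i j.+1 = rcons (sub T i j) alpha.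
Proof.
move=> h1 h2 h3 h4; rewrite /sub.
have -> : j.+2 - i = (j.+1 - i).+1 by lia.
rewrite (take_nth alpha); last by rewrite size_drop; lia.
rewrite nth_drop; congr rcons; have -> : i.-1 + (j.+1 - i) = j by lia.
  exact: (@onth_nth _ alpha alpha T j h4).
Qed.

Lemma size_sub (A : eqType) (T : seq A) i j : 1 <= i -> j < size T -> size (sub T i j) = j.+1 - i.
Proof. by move=> h1 h2; rewrite /sub size_take size_drop; case: ltnP; lia. Qed.

Unset Implicit Arguments. Set Strict Implicit.
Theorem lemma4 (A : eqType) (T : seq A) (i j : nat) (alpha : A) :
  1 <= i -> i <= j -> j < size T ->
  onth T j = Some alpha ->   (* alpha = T[j+1] *)
  let k := lrs_len T i j.+1 in
  inMUS T i j.+1 (j.+1 - k) j.+1 <->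
  (sub T (j.+1 - k) j.+1 = nseq k.+1 alpha \/ k <= lrs_len T i j).
Proof.
move=> h1 h2 h3 h4 k.
have LE : forall a b, lrs_len T a b = Lr (sub T a b) by [].
have XE := subS h1 (leqW h2) h3 h4.
set S' := sub T i j in XE.
have sS' : size S' = j.+1 - i by apply: size_sub.
set X := sub T i j.+1 in XE.
have sX : size X = (j.+1 - i).+1 by rewrite XE size_rcons sS'.
have kE : k = Lr X by [].
have hX : 0 < size X by rewrite sX.
have [hk _] := Lr_prop hX; rewrite -kE in hk.
have [hu hm] := mus_core hX; rewrite -kE in hu hm.
have uE : sub T (j.+1 - k) j.+1 = drop (size X - k.+1) X.
  rewrite (@sub_drop _ T i (j.+1 - k) j.+1 h1); last by move: hk; rewrite sX; lia.
  by congr drop; rewrite sX; lia.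
have u'E : take k (drop (size X - k.+1) X) = drop (size S' - k) S'.
  rewrite XE size_rcons subSS drop_rcons ?leq_subr // -cats1 take_size_cat //.
  rewrite size_drop; move: hk; rewrite sX sS'; lia.
rewrite uE (LE i j) -/S'.
have hkn : k <= size S' by move: hk; rewrite sX sS'; lia.
have dE : drop (size X - k.+1) X = rcons (drop (size S' - k) S') alpha.
  by rewrite XE size_rcons subSS drop_rcons ?leq_subr.
rewrite dE -(@rep_rcons _ S' alpha k hkn) -XE -u'E -hm.
rewrite /inMUS -uE -/X.
split.
- by case.
- move=> H; split => //.
  + move: hk; rewrite sX; lia.
  + lia.
  + by rewrite uE.
Qed.
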